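(* For every integer $d\ge 8$ there exist proper subspaces $C,C'\subsetneq\mathbb{F}_2^d$ such that $C$ is integrally non-degenerate, $\mathbf 1=(1,\dots,1)\in C$, and $\mathbf x\times\mathbf y\in C'$ for all $\mathbf x,\mathbf y\in C$.
   Context: For $\mathbf v,\mathbf w\in\mathbb{F}_2^d$, $\mathbf v\times\mathbf w=(v_1w_1,\dots,v_dw_d)$. Define $B:\mathbb{Z}^d\times\mathbb{F}_2^d\to\mathbb{Z}$ by $B(\mathbf n,\mathbf v)=\sum_{i:\,v_i=1}n_i$. A subspace $C\subset\mathbb{F}_2^d$ is integrally non-degenerate if for every nonzero $\mathbf n\in\mathbb{Z}^d$ there is $\mathbf v\in C$ with $B(\mathbf n,\mathbf v)\neq 0$. *)

(* Defs.v *)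
From HB Require Import structures.
From mathcomp Require Import all_boot all_order all_algebra.
Set Implicit Arguments. Unset Strict Implicit. Unset Printing Implicit Defensive.
Import GRing.Theory.
Local Open Scope ring_scope.

Notation F2vec d := 'rV['F_2]_d.

Definition cwmul d (v w : F2vec d) : F2vec d := \row_i (v 0 i * w 0 i).

Definition Bform d (n : 'I_d -> int) (v : F2vec d) : int :=
  \sum_(i < d | v 0 i == 1) n i.

Definition ones d : F2vec d := \row_i 1.

Definition int_nondegenerate d (C : {vspace F2vec d}) : Prop :=
  forall n : 'I_d -> int, (exists i, n i != 0) ->
    exists2 v, v \in C & Bform n v != 0.

(* Main.v *)
Require Import Defs.
From mathcomp Require Import all_boot all_order all_algebra.
From mathcomp Require Import ring zify.
Import GRing.Theory.
Local Open Scope ring_scope.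

Definition hb (i j : nat) : bool :=
  match j with 0 => true | j'.+1 => odd (i %/ 2 ^ j') end.
Definition Hc : 'M['F_2]_(8, 4) := \matrix_(i, j) (hb i j)%:R.
Definition Hd : 'M['F_2]_(8, 1) := const_mx 1.

Section S.
Variable m : nat.
Definition Cs : {vspace 'rV['F_2]_(8 + m)} := lker (linfun (mulmxr (col_mx Hc (0 : 'M_(m, 4))))).
Definition Cs' : {vspace 'rV['F_2]_(8 + m)} := lker (linfun (mulmxr (col_mx Hd (0 : 'M_(m, 1))))).
Lemma memC x : (x \in Cs) = (lsubmx x *m Hc == 0).
Proof.
rewrite memv_ker lfunE /= -{1}(hsubmxK x) mul_row_col mulmx0 addr0 //.
Qed.
Lemma memC' x : (x \in Cs') = (lsubmx x *m Hd == 0).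
Proof.
rewrite memv_ker lfunE /= -{1}(hsubmxK x) mul_row_col mulmx0 addr0 //.
Qed.
End S.
Lemma sum8 (R : nmodType) (F : 'I_8 -> R) : \sum_i F i =
  F (inord 0) + F (inord 1) + F (inord 2) + F (inord 3) + F (inord 4) + F (inord 5) + F (inord 6) + F (inord 7).
Proof.
rewrite !big_ord_recr big_ord0 /= add0r.
by repeat congr (_ + _); congr F; apply/val_inj; rewrite /= inordK.
Qed.
Notation ck a k := (a 0 (inord k)).
Lemma checkE (a : 'rV['F_2]_8) j : (a *m Hc) 0 j =
  ck a 0 * (hb 0 j)%:R + ck a 1 * (hb 1 j)%:R + ck a 2 * (hb 2 j)%:R + ck a 3 * (hb 3 j)%:R
  + ck a 4 * (hb 4 j)%:R + ck a 5 * (hb 5 j)%:R + ck a 6 * (hb 6 j)%:R + ck a 7 * (hb 7 j)%:R.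
Proof.
rewrite !mxE sum8 !mxE !inordK //.
Qed.
Lemma checksP (a : 'rV['F_2]_8) : (a *m Hc == 0) =
  [&& ck a 0 + ck a 1 + ck a 2 + ck a 3 + ck a 4 + ck a 5 + ck a 6 + ck a 7 == 0,
      ck a 1 + ck a 3 + ck a 5 + ck a 7 == 0,
      ck a 2 + ck a 3 + ck a 6 + ck a 7 == 0 &
      ck a 4 + ck a 5 + ck a 6 + ck a 7 == 0].
Proof.
have E := checkE a.
apply/eqP/and4P.
  move=> H; have := E; rewrite H => {}E.
  have:= E ord0. have:= E (@Ordinal 4 1 erefl). have:= E (@Ordinal 4 2 erefl). have:= E (@Ordinal 4 3 erefl).
  rewrite /= !mxE /= !mulr1 !mulr0 !addr0 !add0r => <- <- <- <-; by split.
move=> [H1 H2 H3 H4]; apply/rowP => j; rewrite E mxE.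
case: j => [[|[|[|[|//]]]] Hj]; rewrite /= ?mulr1 ?mulr0 ?addr0 ?add0r; exact/eqP.
Qed.
Lemma F2_cases (x : 'F_2) : x = 0 \/ x = 1.
Proof. case: x => [[|[|k]] Hk]; [left|right|by []]; exact: val_inj. Qed.
Lemma solve8 {a0 a1 a2 a3 a4 a5 a6 a7 : 'F_2} :
  a0 + a1 + a2 + a3 + a4 + a5 + a6 + a7 == 0 ->
  a1 + a3 + a5 + a7 == 0 -> a2 + a3 + a6 + a7 == 0 -> a4 + a5 + a6 + a7 == 0 ->
  [/\ a3 = -(a0+a1+a2), a5 = -(a0+a1+a4), a6 = -(a0+a2+a4) & a7 = - a1 - a3 - a5].
Proof.
move=> /eqP HP /eqP Q0 /eqP Q1 /eqP Q2; split.
- apply/eqP; rewrite -subr_eq0 opprK.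
  have -> : a3 + (a0 + a1 + a2) = (a0 + a1 + a2 + a3 + a4 + a5 + a6 + a7) - (a4 + a5 + a6 + a7) by ring.
  by rewrite HP Q2 subrr.
- apply/eqP; rewrite -subr_eq0 opprK.
  have -> : a5 + (a0 + a1 + a4) = (a0 + a1 + a2 + a3 + a4 + a5 + a6 + a7) - (a2 + a3 + a6 + a7) by ring.
  by rewrite HP Q1 subrr.
- apply/eqP; rewrite -subr_eq0 opprK.
  have -> : a6 + (a0 + a2 + a4) = (a0 + a1 + a2 + a3 + a4 + a5 + a6 + a7) - (a1 + a3 + a5 + a7) by ring.
  by rewrite HP Q0 subrr.
- apply/eqP; rewrite -subr_eq0.
  have -> : a7 - (- a1 - a3 - a5) = a1 + a3 + a5 + a7 by ring.
  by rewrite Q0.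
Qed.
Lemma selforth (a b : 'rV['F_2]_8) : a *m Hc == 0 -> b *m Hc == 0 ->
  (\row_i (a 0 i * b 0 i)) *m Hd == 0.
Proof.
rewrite !checksP => /and4P [A1 A2 A3 A4] /and4P [B1 B2 B3 B4].
apply/eqP/rowP => j; rewrite !mxE sum8 !mxE.
have [-> -> -> ->] := solve8 A1 A2 A3 A4.
have [-> -> -> ->] := solve8 B1 B2 B3 B4.
case: (F2_cases (ck a 0)) => ->; case: (F2_cases (ck a 1)) => ->;
case: (F2_cases (ck a 2)) => ->; case: (F2_cases (ck a 4)) => ->;
case: (F2_cases (ck b 0)) => ->; case: (F2_cases (ck b 1)) => ->;
case: (F2_cases (ck b 2)) => ->; case: (F2_cases (ck b 4)) => ->; exact/eqP.
Qed.
Definition bits (s : nat) : 'rV['F_2]_8 := \row_(i < 8) (odd (s %/ 2 ^ i))%:R.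
Definition cw m s : 'rV['F_2]_(8 + m) := row_mx (bits s) 0.
Notation bt s k := ((odd (s %/ 2 ^ k))%:R : 'F_2).
Lemma cwE m s : (cw m s \in Cs m) =
  [&& bt s 0 + bt s 1 + bt s 2 + bt s 3 + bt s 4 + bt s 5 + bt s 6 + bt s 7 == 0,
      bt s 1 + bt s 3 + bt s 5 + bt s 7 == 0,
      bt s 2 + bt s 3 + bt s 6 + bt s 7 == 0 &
      bt s 4 + bt s 5 + bt s 6 + bt s 7 == 0].
Proof. by rewrite memC row_mxKl checksP !mxE !inordK. Qed.
Lemma cwE' m s : (cw m s \in Cs' m) =
  (bt s 0 + bt s 1 + bt s 2 + bt s 3 + bt s 4 + bt s 5 + bt s 6 + bt s 7 == 0).
Proof.
rewrite memC' row_mxKl; apply/eqP/eqP.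
  by move/rowP/(_ ord0); rewrite !mxE sum8 !mxE !inordK // !mulr1.
by move=> H; apply/rowP => j; rewrite !mxE sum8 !mxE !inordK // !mulr1 H.
Qed.
Lemma BformE m (n : 'I_(8 + m) -> int) (v : 'rV['F_2]_8) :
  Bform n (row_mx v 0) = \sum_(i < 8) (v 0 i == 1)%:R * n (lshift m i).
Proof.
rewrite /Bform big_mkcond big_split_ord /=.
rewrite [X in _ + X]big1 ?addr0 => [|i _]; last by rewrite row_mxEr mxE.
apply: eq_bigr => i _; rewrite row_mxEl.
by case: (v 0 i == 1); rewrite ?mul1r ?mul0r.
Qed.
Lemma BcwE m (n : 'I_(8 + m) -> int) s : Bform n (cw m s) =
  (bt s 0 == 1)%:R * n (lshift m (inord 0)) + (bt s 1 == 1)%:R * n (lshift m (inord 1))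
  + (bt s 2 == 1)%:R * n (lshift m (inord 2)) + (bt s 3 == 1)%:R * n (lshift m (inord 3))
  + (bt s 4 == 1)%:R * n (lshift m (inord 4)) + (bt s 5 == 1)%:R * n (lshift m (inord 5))
  + (bt s 6 == 1)%:R * n (lshift m (inord 6)) + (bt s 7 == 1)%:R * n (lshift m (inord 7)).
Proof. by rewrite BformE sum8 !mxE !inordK. Qed.
Definition masks := [:: 255; 85; 170; 51; 204; 153; 102; 15; 240; 165; 90; 195; 60; 105; 150]%N.
Lemma masks_in m : all (fun s => cw m s \in Cs m) masks.
Proof. by rewrite /= !cwE. Qed.
Lemma cw1_notin m : (cw m 1 \notin Cs m) && (cw m 1 \notin Cs' m).
Proof. by rewrite cwE cwE'. Qed.

Lemma nondeg m : int_nondegenerate (Cs m).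
Proof.
move=> n [i ni0].
case: (splitP i) => k Hk.
- have ik : i = lshift m k by apply/val_inj.
  rewrite {i Hk}ik in ni0.
  case: (boolP (has (fun s => Bform n (cw m s) != 0) masks)).
    case/hasP => s sin Hs; exists (cw m s) => //.
    exact: (allP (masks_in m)).
  move/hasPn => H; exfalso; move: ni0.
  have := H 255%N isT; have := H 85%N isT; have := H 170%N isT; have := H 51%N isT;
  have := H 204%N isT; have := H 153%N isT; have := H 102%N isT; have := H 15%N isT;
  have := H 240%N isT; have := H 165%N isT; have := H 90%N isT; have := H 195%N isT;
  have := H 60%N isT; have := H 105%N isT; have := H 150%N isT.
  rewrite !BcwE /=.
  rewrite !negbK => /eqP h1 /eqP h2 /eqP h3 /eqP h4 /eqP h5 /eqP h6 /eqP h7 /eqP h8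
    /eqP h9 /eqP h10 /eqP h11 /eqP h12 /eqP h13 /eqP h14 /eqP h15.
  rewrite -[k]inord_val; case: k => [[|[|[|[|[|[|[|[|//]]]]]]]] Hk] /=; apply/negP/negPn/eqP; lia.
- have ik : i = rshift 8 k by apply/val_inj.
  rewrite {i Hk}ik in ni0.
  exists (delta_mx 0 (rshift 8 k)).
    rewrite memC; apply/eqP/rowP => j; rewrite !mxE; apply: big1 => i _.
    by rewrite !mxE eq_lrshift andbF mul0r.
  rewrite /Bform (big_pred1 (rshift 8 k)) // => j /=.
  by rewrite mxE eqxx /=; case: (j == rshift 8 k).
Qed.

Theorem proposition3p2 (d : nat) : (8 <= d)%N ->
  exists C C' : {vspace 'rV['F_2]_d},
    [/\ C != fullv, C' != fullv, int_nondegenerate C, ones d \in C &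
        forall x y, x \in C -> y \in C -> cwmul x y \in C'].
Proof.
move=> Hd; rewrite -(subnKC Hd); move: (d - 8)%N => m.
exists (Cs m), (Cs' m). have /andP [n1 n2] := cw1_notin m. split.
- by apply: contraNneq n1 => ->; rewrite memvf.
- by apply: contraNneq n2 => ->; rewrite memvf.
- exact: nondeg.
- rewrite (memC m) checksP !mxE. by [].
- move=> x y hx hy; rewrite (memC' m (cwmul x y)).
  rewrite (memC m x) in hx; rewrite (memC m y) in hy.
  have -> : lsubmx (cwmul x y) = \row_i (lsubmx x 0 i * lsubmx y 0 i).
    by apply/rowP => i; rewrite !mxE.
  exact: selforth.
Qed.
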